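(* Let $B\subset\mathbb{H}$ have horizontal super-linear growth, i.e. there are constants $c\in(0,\infty)$ and $M<\infty$ such that $h_{x_1}\ge |c x_1|$ for all integers $x_1$ with $|x_1|\ge M$, where $h_{x_1}=\sup\{x_2\ge 0:\ \{x_1\}\times\{1,2,\dots,x_2\}\subset B\}$. Then for every $x\in B$, $$\bar{\mathcal H}_B(x)=0.$$
   Context: $\mathbb{H}=\{(x_1,x_2)\in\mathbb{Z}^2:\ x_2\ge 0\}$ and $L_n=\{(x_1,n):x_1\in\mathbb{Z}\}$. $(S_n)_{n\ge0}$ is a simple random walk on $\mathbb{Z}^2$; $P_z$ denotes its law started at $z$. For $A\subset\mathbb{Z}^2$, $\bar\tau_A=\min\{n\ge0: S_n\in A\}$. For $B\subset\mathbb{H}$, $x\in B$ and $N\ge1$, define $$\bar{\mathcal H}_{B,N}(x)=\sum_{z\in L_N\setminus B}P_z\big(S_{\bar\tau_{B\cup L_0}}=x\big).$$ It is known that the limit $\bar{\mathcal H}_B(x)=\lim_{N\to\infty}\bar{\mathcal H}_{B,N}(x)$ exists and is finite for every $B\subset\mathbb{H}$ and $x\in B$; it is called the stationary harmonic measure of $x$ with respect to $B$. *)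

(* Defs.v *)
From Stdlib Require Import Reals ZArith Classical ClassicalEpsilon.
Open Scope R_scope.

Definition pt : Type := (Z * Z)%type.

Definition ind (P : Prop) : R :=
  if excluded_middle_informative P then 1 else 0.

(* hitP n A x z = P_z( tau_A <= n  and  S_{tau_A} = x ),
   where tau_A = min{ k >= 0 : S_k in A } for simple random walk on Z^2. *)
Fixpoint hitP (n : nat) (A : pt -> Prop) (x : pt) (z : pt) : R :=
  match n with
  | O => if excluded_middle_informative (A z) then ind (z = x) else 0
  | S m =>
      if excluded_middle_informative (A z) then ind (z = x)
      else / 4 * ( hitP m A x ((fst z + 1)%Z, snd z)
                 + hitP m A x ((fst z - 1)%Z, snd z)
                 + hitP m A x (fst z, (snd z + 1)%Z)
                 + hitP m A x (fst z, (snd z - 1)%Z) )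
  end.

(* The limit of a real sequence (its value when the sequence converges). *)
Definition Lim (u : nat -> R) : R :=
  epsilon (inhabits 0) (fun l => Un_cv u l).

(* P_z( S_{tau_A} = x ) = lim_n P_z(tau_A <= n, S_{tau_A} = x) *)
Definition hit_prob (A : pt -> Prop) (x z : pt) : R :=
  Lim (fun n => hitP n A x z).

Definition L0 (z : pt) : Prop := snd z = 0%Z.

Definition in_H (z : pt) : Prop := (0 <= snd z)%Z.

(* term of the sum defining bar H_{B,N}(x), for z = (z1, N) in L_N *)
Definition HbarN_term (B : pt -> Prop) (N : Z) (x : pt) (z1 : Z) : R :=
  if excluded_middle_informative (B (z1, N)) then 0
  else hit_prob (fun w => B w \/ L0 w) x (z1, N).

Definition HbarN_partial (B : pt -> Prop) (N : Z) (x : pt) (K : nat) : R :=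
  sum_f_R0 (fun i => HbarN_term B N x (Z.of_nat i - Z.of_nat K)%Z) (2 * K).

(* bar H_{B,N}(x) = sum_{z in L_N \ B} P_z(S_{tau_{B u L_0}} = x)
   (series of nonnegative terms over Z, as limit of symmetric partial sums) *)
Definition HbarN (B : pt -> Prop) (N : Z) (x : pt) : R :=
  Lim (fun K => HbarN_partial B N x K).

(* h_{x1} >= t, where h_{x1} = sup{ x2 >= 0 : {x1} x {1..x2} subset B }
   (sup in [0, +oo]); sup S >= t  iff  every y < t is exceeded by some element of S *)
Definition height_ge (B : pt -> Prop) (x1 : Z) (t : R) : Prop :=
  forall y : R, y < t ->
    exists x2 : Z, (0 <= x2)%Z /\
      (forall k : Z, (1 <= k <= x2)%Z -> B (x1, k)) /\ y < IZR x2.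

Definition superlinear_growth (B : pt -> Prop) : Prop :=
  exists (c : R) (M : Z), 0 < c /\
    forall x1 : Z, (M <= Z.abs x1)%Z -> height_ge B x1 (Rabs (c * IZR x1)).

(* Main.v *)
Require Import Defs.
From Stdlib Require Import Reals ZArith Lra Lia Psatz Classical ClassicalEpsilon.
Open Scope R_scope.

Definition hh (X Y : R) : R := Y / (X^2 + Y^2).

Module CX.
From Coquelicot Require Import Coquelicot.
Lemma cid (w : Complex.C) : w <> 0%C -> (w*w*w*w - 1 <> 0)%C -> (w+ 1 <> 0)%C -> (w-1 <> 0)%C -> (w+Ci <> 0)%C -> (w-Ci <> 0)%C ->
 (/(w+1) + /(w-1) + /(w+Ci) + /(w-Ci) - 4 / w = 4 / (w * (w*w*w*w-1)))%C.
Proof.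
intros.
assert (Hi: (Ci ^ 2 = -1)%C) by (apply injective_projections; simpl; ring).
field_simplify_eq; [ rewrite Hi; ring | tauto].
Qed.

Lemma lap_hh X Y : 1 < Y ->
  hh (X+1) Y + hh (X-1) Y + hh X (Y+1) + hh X (Y-1) - 4 * hh X Y <= 4 / (Y * (Y^4 - 1)).
Proof.
intros HY.
set (w := (Y, X) : Complex.C).
assert (Hm : Y <= Cmod w).
{ eapply Rle_trans; [| apply Rmax_Cmod]. simpl. eapply Rle_trans; [|apply Rmax_l]. 
  rewrite Rabs_right; lra. }
assert (nz : forall z : Complex.C, 0 < fst z -> z <> 0%C).
{ intros z Hz E; rewrite E in Hz; simpl in Hz; lra. }
assert (H1 : w <> 0%C) by (apply nz; simpl; lra).
assert (H2 : (w+1 <> 0)%C) by (apply nz; simpl; lra).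
assert (H3 : (w-1 <> 0)%C) by (apply nz; simpl; lra).
assert (H4 : (w+Ci <> 0)%C) by (apply nz; simpl; lra).
assert (H5 : (w-Ci <> 0)%C) by (apply nz; simpl; lra).
assert (Hp : Cmod (w*w*w*w) = Cmod w ^ 4) by (rewrite !Cmod_mult; ring).
assert (Hq : Cmod w ^ 4 - 1 <= Cmod (w*w*w*w - 1)).
{ rewrite <- Hp. pose proof (Cmod_triangle (w*w*w*w - 1) 1) as T.
  replace (w * w * w * w - 1 + 1)%C with (w*w*w*w)%C in T by ring.
  rewrite Cmod_1 in T. lra. }
assert (HY4 : Y^4 - 1 <= Cmod w ^4 - 1).
{ assert (Y^4 <= Cmod w ^ 4) by (apply pow_incr; lra). lra. }
assert (HY4p : 0 < Y^4 - 1).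
{ assert (1 < Y^2) by nra. nra. }
assert (H6 : (w*w*w*w - 1 <> 0)%C).
{ intro E. rewrite E, Cmod_0 in Hq. lra. }
pose proof (cid w H1 H6 H2 H3 H4 H5) as E.
apply (f_equal fst) in E.
assert (L : fst (/(w+1) + /(w-1) + /(w+Ci) + /(w-Ci) - 4 / w)%C =
   hh (X+1) Y + hh (X-1) Y + hh X (Y+1) + hh X (Y-1) - 4 * hh X Y).
{ unfold hh, w. simpl. field.
  pose proof (Rle_0_sqr X). pose proof (Rle_0_sqr (X-1)). pose proof (Rle_0_sqr (X+1)).
  assert (0 < (Y-1)*(Y-1)) by (apply Rmult_lt_0_compat; lra). unfold Rsqr in *. clear E Hq Hp HY4 Hm.
  repeat split; apply Rgt_not_eq; apply Rlt_gt; nra. }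
rewrite <- L, E.
eapply Rle_trans; [apply Rle_abs|].
eapply Rle_trans; [apply re_le_Cmod|].
rewrite Cmod_div.
2:{ intro Z. apply (f_equal Cmod) in Z. rewrite Cmod_mult, Cmod_0 in Z. nra. }
rewrite Cmod_mult.
replace (Cmod 4) with 4.
2:{ unfold Cmod. simpl. replace (4 * (4 * 1) + 0 * (0 * 1)) with (4*4) by ring. rewrite sqrt_square; lra. }
unfold Rdiv. apply Rmult_le_compat_l; [lra|].
apply Rinv_le_contravar; [nra|].
apply Rmult_le_compat; nra.
Qed.

End CX.

Lemma lap_hh X Y : 1 < Y ->
  hh (X+1) Y + hh (X-1) Y + hh X (Y+1) + hh X (Y-1) - 4 * hh X Y <= 4 / (Y * (Y^4 - 1)).
Proof. exact (CX.lap_hh X Y). Qed.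

Definition gg (d X Y : R) : R := hh X Y - d / Y.

Lemma T3 d e X Y : 2 <= Y -> 0 < d -> 0 < e < 1 ->
  gg d X (Y-1) / (Y - e) - gg d X (Y+1) / (Y+1) <= 4*Y / ((Y-1)^2 * (Y+1)^2).
Proof.
intros HY Hd He. unfold gg, hh.
set (t := X^2). assert (Ht : 0 <= t) by (unfold t; nra).
set (A := t + (Y-1)^2). set (Bq := t + (Y+1)^2).
assert (HA : (Y-1)^2 <= A) by (unfold A; lra).
assert (HB : (Y+1)^2 <= Bq) by (unfold Bq; lra).
assert (HA0 : 0 < (Y-1)^2) by nra.
assert (s1 : (Y-1)/A/(Y-e) <= 1/A).
{ assert (q : (Y-1)/(Y-e) <= 1).
  { apply (Rmult_le_reg_r (Y-e)); [lra|]. unfold Rdiv. rewrite Rmult_assoc, Rinv_l; lra. }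
  assert (q2 : 0 < 1/A) by (unfold Rdiv; rewrite Rmult_1_l; apply Rinv_0_lt_compat; lra).
  replace ((Y-1)/A/(Y-e)) with (((Y-1)/(Y-e))*(1/A)) by (field; lra). nra. }
assert (s2 : 1/A - (Y+1)/Bq/(Y+1) <= 4*Y/((Y-1)^2*(Y+1)^2)).
{ replace (1/A - (Y+1)/Bq/(Y+1)) with (4*Y/(A*Bq)).
  2:{ unfold A, Bq. field. split; nra. }
  unfold Rdiv. apply Rmult_le_compat_l; [lra|].
  apply Rinv_le_contravar; [nra|]. apply Rmult_le_compat; nra. }
assert (s3 : - (d/(Y-1))/(Y-e) + (d/(Y+1))/(Y+1) <= 0).
{ replace (- (d/(Y-1))/(Y-e) + (d/(Y+1))/(Y+1)) with (d * (1/((Y+1)*(Y+1)) - 1/((Y-1)*(Y-e)))) by (field; lra).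
  assert (1/((Y+1)*(Y+1)) <= 1/((Y-1)*(Y-e))).
  { unfold Rdiv; rewrite !Rmult_1_l. apply Rinv_le_contravar; nra. }
  nra. }
replace (((Y - 1) / A - d / (Y - 1)) / (Y - e) - ((Y + 1) / Bq - d / (Y + 1)) / (Y + 1))
  with (((Y-1)/A/(Y-e) - 1/A) + (1/A - (Y+1)/Bq/(Y+1)) + (- (d/(Y-1))/(Y-e) + (d/(Y+1))/(Y+1))).
2:{ field. unfold A, Bq. repeat split; nra. }
lra.
Qed.

Lemma superh d X Y : 0 < d <= 1/4 -> 2 <= Y -> 8/d + 2 <= Y^2 ->
 gg d (X+1) Y + gg d (X-1) Y + (1 - (d/4)/(Y+1)) * gg d X (Y+1)
   + (Y/(Y-d/4)) * gg d X (Y-1) <= 4 * gg d X Y.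
Proof.
intros Hd HY HY2.
set (e := d/4).
assert (He : 0 < e < 1) by (unfold e; lra).
pose proof (lap_hh X Y ltac:(lra)) as L1.
pose proof (T3 d e X Y HY ltac:(lra) He) as L3.
assert (pos1 : forall a b, b <> 0 -> a / b = a * / b) by (intros; reflexivity).
assert (ID : gg d (X+1) Y + gg d (X-1) Y + (1 - e/(Y+1)) * gg d X (Y+1)
   + (Y/(Y-e)) * gg d X (Y-1) - 4 * gg d X Y =
   (hh (X+1) Y + hh (X-1) Y + hh X (Y+1) + hh X (Y-1) - 4 * hh X Y)
   - d * (2/(Y*(Y^2-1))) + e * (gg d X (Y-1) / (Y - e) - gg d X (Y+1) / (Y+1))).
{ unfold gg, hh.
  pose proof (pow2_ge_0 X). pose proof (pow2_ge_0 (X-1)). pose proof (pow2_ge_0 (X+1)).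
  assert (0 < (Y-1)^2) by (apply pow_lt; lra). assert (0 < (Y+1)^2) by (apply pow_lt; lra).
  assert (0 < Y^2) by (apply pow_lt; lra). clear L1 L3.
  field. repeat split; apply Rgt_not_eq; apply Rlt_gt; nra. }
assert (Fin : 4 / (Y * (Y^4 - 1)) - d * (2/(Y*(Y^2-1))) + e * (4*Y / ((Y-1)^2 * (Y+1)^2)) <= 0).
{ set (u := Y^2).
  assert (Hu : 8/d + 2 <= u) by exact HY2.
  assert (Hdu : 8 <= d * (u - 2)).
  { assert (8/d <= u - 2) by lra. apply (Rmult_le_compat_l d) in H; [|lra].
    unfold Rdiv in H. rewrite <- Rmult_assoc, (Rmult_comm d 8), Rmult_assoc, Rinv_r in H; lra. }
  replace (4 / (Y * (Y^4 - 1)) - d * (2/(Y*(u-1))) + e * (4*Y / ((Y-1)^2 * (Y+1)^2)))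
    with ((4*(u-1) - d*(u+1)*(u-2)) / (Y*(u-1)^2*(u+1))).
  2:{ assert (4 <= Y^2) by (simpl; nra). unfold u, e. clear - H HY. field.
        repeat split; apply Rgt_not_eq; apply Rlt_gt; try nra. }
  assert (4 <= u) by (unfold u; simpl; nra).
  assert (0 < (u-1)^2) by (apply pow_lt; lra).
  assert (0 < Y*(u-1)^2*(u+1)) by (apply Rmult_lt_0_compat; [apply Rmult_lt_0_compat|]; lra).
  apply Rmult_le_reg_r with (Y*(u-1)^2*(u+1)); [lra|].
  unfold Rdiv. rewrite Rmult_0_l, Rmult_assoc, Rinv_l by lra. clear -Hdu H. nra. }
assert (Hpos : 0 <= e) by lra.
assert (L3' : e * (gg d X (Y-1) / (Y - e) - gg d X (Y+1) / (Y+1)) <= e * (4*Y / ((Y-1)^2 * (Y+1)^2)))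
  by (apply Rmult_le_compat_l; lra).
lra.
Qed.

Lemma Lim_mono (u : nat -> R) (b : R) :
  Un_growing u -> (forall n, 0 <= u n <= b) -> 0 <= Lim u <= b.
Proof.
intros Hg Hb.
destruct (growing_cv u Hg) as [l Hl].
{ exists b. intros y [n ->]. apply Hb. }
assert (E : Lim u = l).
{ unfold Lim. apply (UL_sequence u); [|exact Hl].
  apply (epsilon_spec (inhabits 0) (fun l => Un_cv u l)). exists l; exact Hl. }
rewrite E. split.
- apply Rle_trans with (u 0%nat); [apply Hb | apply (growing_ineq u l Hg Hl)].
- apply (Rle_cv_lim (Un := u) (Vn := fun _ => b)); [intro n; apply Hb | exact Hl |].
  intros eps He. exists 0%nat. intros. unfold R_dist. rewrite Rminus_diag, Rabs_R0. exact He.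
Qed.

Lemma ind_nonneg P : 0 <= Defs.ind P.
Proof. unfold Defs.ind. destruct (excluded_middle_informative P); lra. Qed.

Lemma hitP_nonneg n A x z : 0 <= hitP n A x z.
Proof.
revert z; induction n; intro z; simpl.
- destruct (excluded_middle_informative (A z)); [apply ind_nonneg|lra].
- destruct (excluded_middle_informative (A z)); [apply ind_nonneg|].
  pose proof (IHn ((fst z + 1)%Z, snd z)). pose proof (IHn ((fst z - 1)%Z, snd z)).
  pose proof (IHn (fst z, (snd z + 1)%Z)). pose proof (IHn (fst z, (snd z - 1)%Z)). lra.
Qed.

Lemma hitP_mono n A x z : hitP n A x z <= hitP (S n) A x z.
Proof.
revert z; induction n; intro z.
- simpl. destruct (excluded_middle_informative (A z)); [lra|].
  pose proof (hitP_nonneg 0 A x ((fst z + 1)%Z, snd z)). pose proof (hitP_nonneg 0 A x ((fst z - 1)%Z, snd z)).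
  pose proof (hitP_nonneg 0 A x (fst z, (snd z + 1)%Z)). pose proof (hitP_nonneg 0 A x (fst z, (snd z - 1)%Z)).
  simpl in *. lra.
- change (hitP (S n) A x z) with (if excluded_middle_informative (A z) then Defs.ind (z = x)
      else / 4 * ( hitP n A x ((fst z + 1)%Z, snd z)
                 + hitP n A x ((fst z - 1)%Z, snd z)
                 + hitP n A x (fst z, (snd z + 1)%Z)
                 + hitP n A x (fst z, (snd z - 1)%Z) )).
  change (hitP (S (S n)) A x z) with (if excluded_middle_informative (A z) then Defs.ind (z = x)
      else / 4 * ( hitP (S n) A x ((fst z + 1)%Z, snd z)
                 + hitP (S n) A x ((fst z - 1)%Z, snd z)
                 + hitP (S n) A x (fst z, (snd z + 1)%Z)
                 + hitP (S n) A x (fst z, (snd z - 1)%Z) )).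
  destruct (excluded_middle_informative (A z)); [lra|].
  pose proof (IHn ((fst z + 1)%Z, snd z)). pose proof (IHn ((fst z - 1)%Z, snd z)).
  pose proof (IHn (fst z, (snd z + 1)%Z)). pose proof (IHn (fst z, (snd z - 1)%Z)). lra.
Qed.

Lemma hit_bound (A : pt -> Prop) (x : pt) (F : pt -> R)
  (HL0 : forall z, L0 z -> A z)
  (P1 : forall z, in_H z -> A z -> Defs.ind (z = x) <= F z)
  (P2 : forall z, in_H z -> ~ A z -> 0 <= F z /\
     / 4 * (F ((fst z + 1)%Z, snd z) + F ((fst z - 1)%Z, snd z)
          + F (fst z, (snd z + 1)%Z) + F (fst z, (snd z - 1)%Z)) <= F z) :
  forall n z, in_H z -> hitP n A x z <= F z.
Proof.
induction n; intros z Hz; simpl.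
- destruct (excluded_middle_informative (A z)); [apply P1; auto| apply P2; auto].
- destruct (excluded_middle_informative (A z)) as [Ha|Ha]; [apply P1; auto|].
  destruct (P2 z Hz Ha) as [_ Hs].
  assert (H1 : (1 <= snd z)%Z).
  { unfold in_H in Hz. destruct (Z.eq_dec (snd z) 0) as [E|E]; [exfalso; apply Ha, HL0; exact E| lia]. }
  assert (I1 : in_H ((fst z + 1)%Z, snd z)) by (unfold in_H in *; simpl; lia).
  assert (I2 : in_H ((fst z - 1)%Z, snd z)) by (unfold in_H in *; simpl; lia).
  assert (I3 : in_H (fst z, (snd z + 1)%Z)) by (unfold in_H in *; simpl; lia).
  assert (I4 : in_H (fst z, (snd z - 1)%Z)) by (unfold in_H in *; simpl; lia).
  pose proof (IHn _ I1). pose proof (IHn _ I2). pose proof (IHn _ I3). pose proof (IHn _ I4).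
  lra.
Qed.

Lemma hit_prob_bound (A : pt -> Prop) (x z : pt) (b : R) :
  (forall n, hitP n A x z <= b) -> 0 <= hit_prob A x z <= b.
Proof.
intros H. unfold hit_prob. apply Lim_mono.
- intro n. apply hitP_mono.
- intro n. split; [apply hitP_nonneg | apply H].
Qed.



Definition SP (t : Z -> R) (K : nat) : R :=
  sum_f_R0 (fun i => t (Z.of_nat i - Z.of_nat K)%Z) (2 * K).

Lemma SP_step t K : SP t (S K) = t (- Z.of_nat (S K))%Z + SP t K + t (Z.of_nat (S K)).
Proof.
unfold SP. replace (2 * S K)%nat with (S (S (2 * K))) by lia.
rewrite tech5. rewrite decomp_sum by lia. simpl Init.Nat.pred.
replace (Z.of_nat 0 - Z.of_nat (S K))%Z with (- Z.of_nat (S K))%Z by lia.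
replace (Z.of_nat (S (S (2 * K))) - Z.of_nat (S K))%Z with (Z.of_nat (S K)) by lia.
replace (K + (K + 0))%nat with (2 * K)%nat by lia.
rewrite (sum_eq (fun i : nat => t (Z.of_nat (S i) - Z.of_nat (S K))%Z) (fun i => t (Z.of_nat i - Z.of_nat K)%Z)).
- reflexivity.
- intros i _. f_equal. lia.
Qed.

Lemma SP_bound t C R0 : (forall z, 0 <= t z <= C) ->
  (forall z, (Z.of_nat R0 < Z.abs z)%Z -> t z = 0) ->
  forall K, 0 <= SP t K <= (2 * INR (Nat.min K R0) + 1) * C.
Proof.
intros Hb Hz. induction K.
- unfold SP. simpl. pose proof (Hb 0%Z). simpl in *. lra.
- rewrite SP_step. pose proof (Hb (- Z.of_nat (S K))%Z). pose proof (Hb (Z.of_nat (S K))).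
  destruct (le_lt_dec (S K) R0) as [h|h].
  + replace (Nat.min (S K) R0) with (S K) by lia. replace (Nat.min K R0) with K in IHK by lia.
    rewrite S_INR. lra.
  + rewrite (Hz (- Z.of_nat (S K))%Z) by lia. rewrite (Hz (Z.of_nat (S K))) by lia.
    replace (Nat.min (S K) R0) with R0 by lia. replace (Nat.min K R0) with R0 in IHK by lia. lra.
Qed.

Lemma SP_mono t : (forall z, 0 <= t z) -> Un_growing (SP t).
Proof. intros H K. rewrite SP_step. pose proof (H (- Z.of_nat (S K))%Z). pose proof (H (Z.of_nat (S K))). lra. Qed.

Lemma HbarN_bound B N x C R0 :
  (forall z, 0 <= HbarN_term B N x z <= C) ->
  (forall z, (Z.of_nat R0 < Z.abs z)%Z -> HbarN_term B N x z = 0) ->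
  0 <= HbarN B N x <= (2 * INR R0 + 1) * C.
Proof.
intros Hb Hz. unfold HbarN. apply Lim_mono.
- change (fun K => HbarN_partial B N x K) with (SP (HbarN_term B N x)).
  apply SP_mono. intro z; apply Hb.
- intro K. change (HbarN_partial B N x K) with (SP (HbarN_term B N x) K).
  pose proof (SP_bound _ C R0 Hb Hz K). pose proof (Hb 0%Z).
  assert (INR (Nat.min K R0) <= INR R0) by (apply le_INR; lia). nra.
Qed.

Fixpoint aa (e : R) (n : nat) : R :=
  match n with O => 1 | S m => aa e m * (1 - e / (INR m + 1)) end.

Lemma aa_pos e n : 0 < e < 1 -> 0 < aa e n.
Proof.
intros He; induction n; simpl; [lra|].
apply Rmult_lt_0_compat; [lra|].
pose proof (pos_INR n).
assert (e / (INR n + 1) < 1).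
{ apply (Rmult_lt_reg_r (INR n + 1)); [lra|]. unfold Rdiv. rewrite Rmult_assoc, Rinv_l; lra. }
lra.
Qed.

Lemma ln_le' x y : 0 < x -> x <= y -> ln x <= ln y.
Proof. intros H1 H2. destruct H2 as [H2|H2]; [left; apply ln_increasing; auto| subst; lra]. Qed.

Lemma ln_step y : 0 < y -> ln (y + 1) - ln y <= 1 / y.
Proof.
intros Hy.
replace (y + 1) with (y * (1 + 1/y)) by (field; lra).
rewrite ln_mult by (try lra; assert (0 < 1/y) by (apply Rdiv_lt_0_compat; lra); lra).
assert (ln (1 + 1/y) <= 1/y).
{ rewrite <- (ln_exp (1/y)) at 2. apply ln_le'.
  - assert (0 < 1/y) by (apply Rdiv_lt_0_compat; lra); lra.
  - apply exp_ineq1_le. }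
lra.
Qed.

Lemma aa_bound e n : 0 < e < 1 -> aa e n * (1 + e * ln (INR n + 1)) <= 1.
Proof.
intros He; induction n.
- simpl. rewrite Rplus_0_l, ln_1. lra.
- cbn [aa]. rewrite S_INR.
  set (y := INR n + 1). assert (Hy : 1 <= y) by (unfold y; pose proof (pos_INR n); lra).
  pose proof (ln_step y ltac:(lra)) as Hl.
  assert (Hln : 0 <= ln y) by (rewrite <- ln_1; apply ln_le'; lra).
  pose proof (aa_pos e n He) as Ha.
  set (t := e / y).
  assert (Ht : 0 < t < 1).
  { unfold t; split; [apply Rdiv_lt_0_compat; lra|].
    apply (Rmult_lt_reg_r y); [lra|]. unfold Rdiv. rewrite Rmult_assoc, Rinv_l; lra. }
  assert (Hlt : e * ln (y + 1) <= e * ln y + t).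
  { unfold t. replace (e / y) with (e * (1/y)) by (field; lra).
    assert (ln (y+1) <= ln y + 1/y) by lra. nra. }
  (* aa * (1 - t) * (1 + e ln(y+1)) <= aa * (1-t) * (1 + e ln y + t) <= aa (1 + e ln y) *)
  assert (Hk : (1 - t) * (1 + e * ln y + t) <= 1 + e * ln y).
  { assert (0 <= t * (e * ln y + t)) by (apply Rmult_le_pos; nra). nra. }
  apply Rle_trans with (aa e n * ((1 - t) * (1 + e * ln y + t))).
  + rewrite Rmult_assoc. apply Rmult_le_compat_l; [lra|]. nra.
  + apply Rle_trans with (aa e n * (1 + e * ln y)); [|exact IHn].
    apply Rmult_le_compat_l; lra.
Qed.

Lemma aa_lim e : 0 < e < 1 -> forall eta, 0 < eta -> exists n0, forall n, (n0 <= n)%nat -> aa e n < eta.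
Proof.
intros He eta Heta.
destruct (INR_unbounded (exp (1 / (e * eta)))) as [n0 Hn0].
exists n0. intros n Hn.
pose proof (aa_bound e n He) as Hb. pose proof (aa_pos e n He).
assert (INR n0 <= INR n) by (apply le_INR; lia).
assert (L : 1 / (e * eta) < ln (INR n + 1)).
{ rewrite <- (ln_exp (1 / (e*eta))). apply ln_increasing; [apply exp_pos| lra]. }
assert (0 < e * eta) by nra.
assert (1 < e * eta * ln (INR n + 1)).
{ apply (Rmult_lt_compat_l (e*eta)) in L; [|lra]. unfold Rdiv in L. rewrite <- Rmult_assoc, Rmult_1_r, Rinv_r in L; lra. }
nra.
Qed.

Lemma free_pt (B : pt -> Prop) c M
  (Hg : forall x1 : Z, (M <= Z.abs x1)%Z -> height_ge B x1 (Rabs (c * IZR x1))) (Hc : 0 < c)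
  (z : pt) : ~ B z -> (1 <= snd z)%Z ->
  (Z.abs (fst z) < M)%Z \/ c * Rabs (IZR (fst z)) <= IZR (snd z).
Proof.
destruct z as [z1 z2]; simpl. intros HB H1.
destruct (Z_lt_le_dec (Z.abs z1) M) as [h|h]; [left; exact h| right].
destruct (Rle_dec (c * Rabs (IZR z1)) (IZR z2)) as [r|r]; [exact r|exfalso].
destruct (Hg z1 h (IZR z2)) as [x2 [Hx2 [Hcol Hlt]]].
{ rewrite Rabs_mult, (Rabs_right c) by lra. lra. }
apply lt_IZR in Hlt. apply HB, Hcol. lia.
Qed.

Lemma gg_nonneg d X Y : 0 < Y -> d * X^2 <= (1-d) * Y^2 -> 0 <= gg d X Y.
Proof.
intros HY H. unfold gg, hh.
assert (0 <= X^2) by apply pow2_ge_0. assert (0 < Y^2) by (apply pow_lt; lra).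
replace (Y / (X^2 + Y^2) - d / Y) with ((Y^2 - d*(X^2+Y^2)) / (Y * (X^2+Y^2))) by (field; lra).
apply Rmult_le_pos; [lra|]. left. apply Rinv_0_lt_compat. apply Rmult_lt_0_compat; lra.
Qed.

Lemma gg_pos d X Y : 0 < Y -> d * X^2 < (1-d) * Y^2 -> 0 < gg d X Y.
Proof.
intros HY H. unfold gg, hh.
assert (0 <= X^2) by apply pow2_ge_0. assert (0 < Y^2) by (apply pow_lt; lra).
replace (Y / (X^2 + Y^2) - d / Y) with ((Y^2 - d*(X^2+Y^2)) / (Y * (X^2+Y^2))) by (field; lra).
apply Rmult_lt_0_compat; [lra|]. apply Rinv_0_lt_compat. apply Rmult_lt_0_compat; lra.
Qed.

Lemma gg_le d X Y : 0 < d -> 1 <= Y -> gg d X Y <= 1 / Y.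
Proof.
intros Hd HY. unfold gg, hh.
assert (0 <= X^2) by apply pow2_ge_0. assert (0 < Y^2) by (apply pow_lt; lra).
assert (Y / (X^2+Y^2) <= Y / Y^2).
{ unfold Rdiv. apply Rmult_le_compat_l; [lra|]. apply Rinv_le_contravar; lra. }
replace (Y / Y^2) with (1/Y) in H1 by (field; lra).
assert (0 < d / Y) by (apply Rdiv_lt_0_compat; lra). lra.
Qed.

Lemma pos_cond L d X' Y' Y : 0 <= L -> d = / (8 * (1+L)^2) -> 2 <= Y ->
  Rabs X' <= L * Y + 1 -> Y - 1 <= Y' -> d * X'^2 <= (1-d) * Y'^2.
Proof.
intros HL Hd HY HX HY'.
assert (A1 : Rabs X' <= (L+1) * (2 * Y')) by nra.
assert (A0 : 0 <= Rabs X') by apply Rabs_pos.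
assert (A2 : X'^2 <= ((L+1) * (2*Y'))^2).
{ rewrite <- (pow2_abs X'). apply pow_incr. lra. }
assert (Hd8 : 0 < 8 * (1+L)^2) by (apply Rmult_lt_0_compat; [lra| apply pow_lt; lra]).
assert (Hd1 : d * (8 * (1+L)^2) = 1) by (rewrite Hd; field; lra).
assert (Hdp : 0 < d) by (rewrite Hd; apply Rinv_0_lt_compat; lra).
assert (d <= 1/8).
{ assert (1 <= (1+L)^2) by nra. nra. }
assert (d * X'^2 <= d * ((L+1)*(2*Y'))^2) by (apply Rmult_le_compat_l; lra).
replace (d * ((L+1)*(2*Y'))^2) with (d * (8 * (1+L)^2) * (Y'^2/2)) in H0 by (field).
rewrite Hd1 in H0. assert (0 <= Y'^2) by apply pow2_ge_0. nra.
Qed.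

Definition Yc (D : nat) (z : pt) : R := IZR (snd z) + INR D.
Definition idx (D : nat) (z : pt) : nat := Z.to_nat (snd z + Z.of_nat D).
Definition Fq (d K : R) (D : nat) (z : pt) : R :=
  K * Rmax 0 (aa (d/4) (idx D z) * gg d (IZR (fst z)) (Yc D z)).

Lemma idx_INR D z : in_H z -> INR (idx D z) = Yc D z.
Proof.
intro H. unfold idx, Yc, in_H in *. rewrite INR_IZR_INZ, Z2Nat.id by lia.
rewrite plus_IZR, <- INR_IZR_INZ. reflexivity.
Qed.

Lemma P2_lemma (B : pt -> Prop) c M
  (Hg : forall x1 : Z, (M <= Z.abs x1)%Z -> height_ge B x1 (Rabs (c * IZR x1))) (Hc : 0 < c)
  d K D : d = / (8 * (1 + / c)^2) -> 0 < K -> 8/d + 2 <= INR D -> c * Rabs (IZR M) <= INR D ->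
  forall z, in_H z -> ~ (B z \/ L0 z) -> 0 <= Fq d K D z /\
     / 4 * (Fq d K D ((fst z + 1)%Z, snd z) + Fq d K D ((fst z - 1)%Z, snd z)
          + Fq d K D (fst z, (snd z + 1)%Z) + Fq d K D (fst z, (snd z - 1)%Z)) <= Fq d K D z.
Proof.
intros Hd HK HD1 HD2 [z1 z2] Hz Hn.
unfold in_H, L0 in *; cbn [fst snd] in *.
assert (HB : ~ B (z1, z2)) by tauto.
assert (H1 : (1 <= z2)%Z) by (assert (z2 <> 0%Z) by tauto; lia).
assert (HL : 0 < / c) by (apply Rinv_0_lt_compat; lra).
assert (Hdp : 0 < d) by (rewrite Hd; apply Rinv_0_lt_compat; apply Rmult_lt_0_compat; [lra|apply pow_lt; lra]).
assert (Hd8 : d <= 1/8).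
{ rewrite Hd. assert (1 <= (1 + /c)^2) by nra. 
  apply (Rmult_le_reg_r (8 * (1 + /c)^2)); [nra|]. rewrite Rinv_l by nra. nra. }
set (Y := IZR z2 + INR D).
assert (HY1 : 1 + INR D <= Y) by (unfold Y; apply IZR_le in H1; lra).
assert (HdD : 0 < 8 / d) by (apply Rdiv_lt_0_compat; lra).
assert (HY2 : 2 <= Y) by lra.
assert (HYY : 8 / d + 2 <= Y^2) by nra.
set (X := IZR z1).
assert (HX : Rabs X <= / c * Y).
{ destruct (free_pt B c M Hg Hc (z1, z2) HB H1) as [h|h]; simpl in h.
  - assert (Rabs X < IZR M).
    { unfold X. rewrite <- abs_IZR. apply IZR_lt. exact h. }
    assert (IZR M <= Rabs (IZR M)) by apply Rle_abs.
    assert (Rabs (IZR M) <= / c * INR D).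
    { apply (Rmult_le_reg_l c); [lra|]. rewrite <- Rmult_assoc, Rinv_r, Rmult_1_l; lra. }
    assert (0 <= IZR z2) by (apply IZR_le; lia). unfold Y. nra.
  - assert (Rabs X <= / c * IZR z2).
    { apply (Rmult_le_reg_l c); [lra|]. rewrite <- Rmult_assoc, Rinv_r, Rmult_1_l by lra. exact h. }
    assert (0 <= INR D) by apply pos_INR. unfold Y. nra. }
set (n := idx D (z1, z2)).
assert (Hn1 : INR n = Y) by (apply idx_INR; unfold in_H; simpl; lia).
assert (E1 : idx D ((z1 + 1)%Z, z2) = n) by reflexivity.
assert (E2 : idx D ((z1 - 1)%Z, z2) = n) by reflexivity.
assert (E3 : idx D (z1, (z2 + 1)%Z) = S n) by (unfold n, idx; simpl; lia).
destruct n as [|m] eqn:En.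
{ simpl in Hn1. lra. }
assert (E4 : idx D (z1, (z2 - 1)%Z) = m).
{ unfold idx in *; simpl in *. lia. }
assert (Y1 : Yc D ((z1 + 1)%Z, z2) = Y) by reflexivity.
assert (Y2 : Yc D ((z1 - 1)%Z, z2) = Y) by reflexivity.
assert (Y3 : Yc D (z1, (z2 + 1)%Z) = Y + 1) by (unfold Yc, Y; simpl; rewrite plus_IZR; ring).
assert (Y4 : Yc D (z1, (z2 - 1)%Z) = Y - 1) by (unfold Yc, Y; simpl; rewrite minus_IZR; ring).
assert (Y0 : Yc D (z1, z2) = Y) by reflexivity.
unfold Fq; simpl fst; simpl snd.
rewrite E1, E2, E3, E4, Y1, Y2, Y3, Y4, Y0. fold n. rewrite En.
rewrite plus_IZR, minus_IZR. fold X.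
assert (He : 0 < d/4 < 1) by lra.
assert (Hm : INR m + 1 = Y) by (rewrite <- Hn1, S_INR; reflexivity).
assert (Ha : aa (d/4) (S m) = aa (d/4) m * (1 - d/4 / Y)) by (simpl; rewrite Hm; reflexivity).
assert (Ha2 : aa (d/4) (S (S m)) = aa (d/4) (S m) * (1 - d/4 / (Y+1))) by (cbn [aa]; rewrite S_INR, Hm; reflexivity).
rewrite Ha2.
set (a := aa (d/4) (S m)).
assert (Hap : 0 < a) by (apply aa_pos; lra).
assert (Ham : aa (d/4) m = a * (Y / (Y - d/4))).
{ unfold a. rewrite Ha. field. split; lra. }
rewrite Ham.
assert (PX : forall X', Rabs X' <= / c * Y + 1 -> forall Y', Y - 1 <= Y' -> 0 <= gg d X' Y').
{ intros X' HX' Y' HY'. apply gg_nonneg; [lra|]. apply (pos_cond (/c) d X' Y' Y); auto; lra. }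
assert (g0 : 0 <= gg d X Y) by (apply PX; lra).
assert (g1 : 0 <= gg d (X+1) Y).
{ apply PX; [|lra]. pose proof (Rabs_triang X 1). rewrite Rabs_R1 in H. lra. }
assert (g2 : 0 <= gg d (X-1) Y).
{ apply PX; [|lra]. pose proof (Rabs_triang X (-1)). replace (Rabs (-1)) with 1 in H by (rewrite Rabs_left; lra). replace (X - 1) with (X + -1) by ring. lra. }
assert (g3 : 0 <= gg d X (Y+1)) by (apply PX; lra).
assert (g4 : 0 <= gg d X (Y-1)) by (apply PX; lra).
assert (c1 : 0 < 1 - d/4/(Y+1)).
{ assert (d/4/(Y+1) < 1). { apply (Rmult_lt_reg_r (Y+1)); [lra|]. unfold Rdiv. rewrite Rmult_assoc, Rinv_l; lra. } lra. }
assert (c2 : 0 < Y / (Y - d/4)) by (apply Rdiv_lt_0_compat; lra).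
rewrite !Rmax_right.
2,3,4,5,6: first [apply Rmult_le_pos; [apply Rmult_le_pos|]; lra | apply Rmult_le_pos; lra].
split. { apply Rmult_le_pos; [lra|]. apply Rmult_le_pos; lra. }
pose proof (superh d X Y ltac:(lra) HY2 HYY) as Hsup.
replace (/ 4 * (K * (a * gg d (X + 1) Y) + K * (a * gg d (X - 1) Y) +
     K * (a * (1 - d / 4 / (Y + 1)) * gg d X (Y + 1)) + K * (a * (Y / (Y - d / 4)) * gg d X (Y - 1))))
  with ((K * a / 4) * (gg d (X+1) Y + gg d (X-1) Y + (1 - (d/4)/(Y+1)) * gg d X (Y+1)
   + (Y/(Y-d/4)) * gg d X (Y-1))).
2:{ field. lra. }
replace (K * (a * gg d X Y)) with ((K * a / 4) * (4 * gg d X Y)) by field.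
apply Rmult_le_compat_l; [|exact Hsup].
assert (0 < K * a) by (apply Rmult_lt_0_compat; lra). lra.
Qed.

Lemma Fq_le d K D z : 0 < d <= 1/4 -> 0 < K -> in_H z -> 1 <= Yc D z ->
  Fq d K D z <= K * aa (d/4) (idx D z) / Yc D z.
Proof.
intros Hd HK Hz HY. unfold Fq.
pose proof (aa_pos (d/4) (idx D z) ltac:(lra)) as Ha.
pose proof (gg_le d (IZR (fst z)) (Yc D z) ltac:(lra) HY) as Hg.
assert (0 < 1 / Yc D z) by (apply Rdiv_lt_0_compat; lra).
assert (Rmax 0 (aa (d/4) (idx D z) * gg d (IZR (fst z)) (Yc D z)) <= aa (d/4) (idx D z) * (1 / Yc D z)).
{ apply Rmax_lub; [nra|]. apply Rmult_le_compat_l; lra. }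
replace (K * aa (d / 4) (idx D z) / Yc D z) with (K * (aa (d/4) (idx D z) * (1 / Yc D z))) by (field; lra).
apply Rmult_le_compat_l; lra.
Qed.

Theorem theorem1 (B : pt -> Prop) (HBH : forall z, B z -> in_H z)
  (Hgrowth : superlinear_growth B) (x : pt) (Hx : B x) :
  Un_cv (fun n : nat => HbarN B (Z.of_nat n + 1)%Z x) 0.
Proof.
destruct Hgrowth as [c [M [Hc Hg]]].
assert (HL : 0 < / c) by (apply Rinv_0_lt_compat; lra).
set (d := / (8 * (1 + / c)^2)).
assert (Hdp : 0 < d) by (unfold d; apply Rinv_0_lt_compat; apply Rmult_lt_0_compat; [lra|apply pow_lt; lra]).
assert (Hd8 : d <= 1/8).
{ unfold d. assert (1 <= (1 + /c)^2) by nra.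
  apply (Rmult_le_reg_r (8 * (1 + /c)^2)); [nra|]. rewrite Rinv_l by nra. nra. }
destruct x as [x1 x2].
assert (Hx2 : (0 <= x2)%Z) by (apply (HBH _ Hx)).
destruct (INR_unbounded (8/d + 2 + c * Rabs (IZR M) + Rabs (IZR x1) + 1)) as [D HD].
assert (HdD : 0 < 8 / d) by (apply Rdiv_lt_0_compat; lra).
assert (0 <= c * Rabs (IZR M)) by (apply Rmult_le_pos; [lra|apply Rabs_pos]).
assert (0 <= Rabs (IZR x1)) by apply Rabs_pos.
set (A := fun w => B w \/ L0 w).
set (ax := aa (d/4) (idx D (x1, x2))).
set (gx := gg d (IZR x1) (Yc D (x1, x2))).
assert (Hax : 0 < ax) by (apply aa_pos; lra).
assert (HYx : Yc D (x1, x2) = IZR x2 + INR D) by reflexivity.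
assert (Hx2R : 0 <= IZR x2) by (apply IZR_le; lia).
assert (Hgx : 0 < gx).
{ apply gg_pos; [lra|].
  assert (Rabs (IZR x1) < Yc D (x1,x2)) by lra.
  assert (IZR x1 ^ 2 < Yc D (x1,x2) ^ 2).
  { rewrite <- (pow2_abs (IZR x1)). pose proof (Rabs_pos (IZR x1)). simpl. nra. }
  nra. }
set (K := / (ax * gx)).
assert (HK : 0 < K) by (apply Rinv_0_lt_compat; nra).
assert (Hbound : forall n z, in_H z -> hitP n A (x1, x2) z <= Fq d K D z).
{ apply hit_bound.
  - intros z Hz. right. exact Hz.
  - intros z Hz Ha. unfold Defs.ind. destruct (excluded_middle_informative (z = (x1, x2))) as [E|E].
    + subst z. unfold Fq. cbn [fst snd]. fold ax gx. rewrite Rmax_right by nra.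
      unfold K. rewrite Rinv_l by nra. lra.
    + unfold Fq. apply Rmult_le_pos; [lra| apply Rmax_l].
  - apply (P2_lemma B c M Hg Hc d K D); auto; lra. }
intros eta Heta.
set (Cst := (2 / c + 3) * K).
assert (HCst : 0 < Cst) by (unfold Cst; assert (0 < 2 / c) by (apply Rdiv_lt_0_compat; lra); nra).
destruct (aa_lim (d/4) ltac:(lra) (eta / Cst) ltac:(apply Rdiv_lt_0_compat; lra)) as [n0 Hn0].
exists n0. intros n Hn. unfold R_dist. rewrite Rminus_0_r.
set (N := (Z.of_nat n + 1)%Z).
set (Y := IZR N + INR D).
assert (HY : 1 + INR D <= Y) by (unfold Y, N; rewrite plus_IZR, <- INR_IZR_INZ; pose proof (pos_INR n); lra).
set (m := Z.to_nat (N + Z.of_nat D)).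
assert (Hm : (n0 <= m)%nat) by (unfold m, N; lia).
set (R0 := Z.to_nat (up (Y / c))).
assert (HYc : 0 < Y / c) by (apply Rdiv_lt_0_compat; lra).
destruct (archimed (Y / c)) as [Hu1 Hu2].
assert (HR0 : INR R0 = IZR (up (Y / c))).
{ unfold R0. rewrite INR_IZR_INZ, Z2Nat.id; [reflexivity|]. apply le_IZR. lra. }
assert (HB : 0 <= HbarN B N (x1, x2) <= (2 * INR R0 + 1) * (K * aa (d/4) m / Y)).
{ apply HbarN_bound.
  - intro z1. unfold HbarN_term.
    destruct (excluded_middle_informative (B (z1, N))) as [Hb|Hb].
    + split; [lra|]. unfold Rdiv. apply Rmult_le_pos; [apply Rmult_le_pos; [lra|left; apply aa_pos; lra]|left; apply Rinv_0_lt_compat; lra].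
    + assert (HzH : in_H (z1, N)) by (unfold in_H, N; simpl; lia).
      assert (Hle := Fq_le d K D (z1, N) ltac:(lra) HK HzH ltac:(unfold Yc; simpl; fold Y; lra)).
      apply hit_prob_bound. intro k. eapply Rle_trans; [apply Hbound; exact HzH|]. exact Hle.
  - intros z1 Hz1. unfold HbarN_term.
    destruct (excluded_middle_informative (B (z1, N))) as [Hb|Hb]; [reflexivity|exfalso].
    assert (H1 : (1 <= snd (z1, N))%Z) by (simpl; unfold N; lia).
    destruct (free_pt B c M Hg Hc (z1, N) Hb H1) as [h|h]; simpl in h.
    +
      assert (Rabs (IZR z1) < IZR M) by (rewrite <- abs_IZR; apply IZR_lt; exact h).
      assert (IZR M <= Rabs (IZR M)) by apply Rle_abs.
      assert (Rabs (IZR M) <= INR D / c).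
      { apply (Rmult_le_reg_l c); [lra|]. unfold Rdiv. rewrite <- Rmult_assoc, (Rmult_comm c (INR D)), Rmult_assoc, Rinv_r, Rmult_1_r; lra. }
      assert (INR D / c <= Y / c) by (unfold Rdiv; apply Rmult_le_compat_r; [lra|lra]).
      assert (Hz2 : IZR (Z.abs z1) > IZR (Z.of_nat R0)) by (apply IZR_lt; lia).
      rewrite abs_IZR, <- INR_IZR_INZ in Hz2. lra.
    + assert (Rabs (IZR z1) <= Y / c).
      { apply (Rmult_le_reg_l c); [lra|]. unfold Rdiv. rewrite (Rmult_comm Y), <- Rmult_assoc, Rinv_r, Rmult_1_l by lra.
        assert (IZR N <= Y) by (unfold Y; pose proof (pos_INR D); lra). lra. }
      assert (Hz2 : IZR (Z.abs z1) > IZR (Z.of_nat R0)) by (apply IZR_lt; lia).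
      rewrite abs_IZR, <- INR_IZR_INZ in Hz2. lra. }
assert (Ham : aa (d/4) m < eta / Cst) by (apply Hn0; exact Hm).
assert (Hap : 0 < aa (d/4) m) by (apply aa_pos; lra).
rewrite Rabs_right by lra.
apply Rle_lt_trans with ((2 * INR R0 + 1) * (K * aa (d / 4) m / Y)); [apply HB|].
assert (HR0' : INR R0 <= Y / c + 1) by lra.
apply Rle_lt_trans with (Cst * aa (d/4) m).
- unfold Cst.
  replace ((2 * INR R0 + 1) * (K * aa (d / 4) m / Y)) with ((2 * INR R0 + 1) / Y * (K * aa (d / 4) m)) by (field; lra).
  rewrite Rmult_assoc. apply Rmult_le_compat_r; [nra|].
  apply (Rmult_le_reg_r Y); [lra|]. unfold Rdiv. rewrite Rmult_assoc, Rinv_l by lra.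
  assert (INR R0 * 2 <= (Y * / c + 1) * 2) by (unfold Rdiv in HR0'; lra).
  assert (0 < / c) by lra. nra.
- apply (Rmult_lt_reg_l (/ Cst)); [apply Rinv_0_lt_compat; lra|].
  rewrite <- Rmult_assoc, Rinv_l by lra. unfold Rdiv in Ham. lra.
Qed.
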